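(* Let $\Gamma=\{f_1,\dots,f_n\}$ be a family of weak weight-functions and suppose there is a nonzero direction $\mathbf{r}\in[0,1]^n$ such that each $f_i$ has a directional derivative in direction $\mathbf{r}$ at every point and $\frac{\partial f_i}{\partial\mathbf{r}}(\mathbf{x})\ge 0$ for every $i$ and every $\mathbf{x}\in[0,1]^n$. Then $\mathsf{BGM}_\Gamma$ is an $\mathbf{r}$-increasing pre-aggregation function.
   Context: A family of weak weight-functions (wFWF) is a family $\Gamma=\{f_i:[0,1]^n\to[0,1]\mid 1\le i\le n\}$ such that (I) $\sum_{i=1}^n f_i(\mathbf{x})\le 1$ for all $\mathbf{x}\in[0,1]^n$ and (II) $\sum_{i=1}^n f_i(1,\dots,1)=1$. The bounded generalized mixture function is $\mathsf{BGM}_\Gamma(\mathbf{x})=\sum_{i=1}^n f_i(\mathbf{x})\,x_i$. For a nonzero $\mathbf{r}\in\mathbb{R}^n$, $F:[0,1]^n\to[0,1]$ is $\mathbf{r}$-increasing if $F(\mathbf{x})\le F(x_1+tr_1,\dots,x_n+tr_n)$ for all $\mathbf{x}\in[0,1]^n$ and $t>0$ with $(x_1+tr_1,\dots,x_n+tr_n)\in[0,1]^n$. $F$ is a pre-aggregation function if $F(0,\dots,0)=0$, $F(1,\dots,1)=1$ and $F$ is $\mathbf{r}$-increasing for some nonzero $\mathbf{r}\in[0,1]^n$. *)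

(* Defs.v *)
From HB Require Import structures.
From mathcomp Require Import all_boot all_order all_algebra.
From mathcomp Require Import all_classical all_reals all_analysis.
Set Implicit Arguments. Unset Strict Implicit. Unset Printing Implicit Defensive.
Import Order.TTheory GRing.Theory Num.Theory.
Local Open Scope ring_scope.
Import numFieldNormedType.Exports.
Local Open Scope classical_set_scope.

Section Defs.
Variables (R : realType) (n : nat).

Definition in_cube (x : 'I_n -> R) : Prop := forall i, 0 <= x i <= 1.

Definition zero_vec : 'I_n -> R := fun _ => 0.
Definition one_vec : 'I_n -> R := fun _ => 1.

Definition shift (x r : 'I_n -> R) (t : R) : 'I_n -> R := fun i => x i + t * r i.

Definition is_dir_deriv (f : ('I_n -> R) -> R) (x r : 'I_n -> R) (d : R) : Prop :=
  (fun t : R => (f (shift x r t) - f x) / t)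
    @ within [set t : R | in_cube (shift x r t)] (0 : R)^' --> d.

Definition wFWF (f : 'I_n -> ('I_n -> R) -> R) : Prop :=
  [/\ (forall i x, in_cube x -> 0 <= f i x <= 1),
      (forall x, in_cube x -> \sum_(i < n) f i x <= 1) &
      \sum_(i < n) f i one_vec = 1].

Definition BGM (f : 'I_n -> ('I_n -> R) -> R) (x : 'I_n -> R) : R :=
  \sum_(i < n) f i x * x i.

Definition r_increasing (F : ('I_n -> R) -> R) (r : 'I_n -> R) : Prop :=
  forall x t, in_cube x -> 0 < t -> in_cube (shift x r t) -> F x <= F (shift x r t).

Definition nonzero_vec (r : 'I_n -> R) : Prop := exists i, r i != 0.

Definition pre_aggregation (F : ('I_n -> R) -> R) : Prop :=
  [/\ (forall x, in_cube x -> 0 <= F x <= 1),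
      F zero_vec = 0, F one_vec = 1 &
      exists r, [/\ nonzero_vec r, in_cube r & r_increasing F r]].

End Defs.

(* Main.v *)
Require Import Defs.
From HB Require Import structures.
From mathcomp Require Import all_boot all_order all_algebra.
From mathcomp Require Import all_classical all_reals all_analysis.
Import Order.TTheory GRing.Theory Num.Theory.
Local Open Scope ring_scope.
Import numFieldNormedType.Exports.
Local Open Scope classical_set_scope.
From mathcomp Require Import lra.

Section M.
Variables (R : realType) (g : R -> R) (t : R).
Hypothesis t0 : 0 < t.
Hypothesis H : forall s, 0 <= s <= t -> exists2 d,
  (fun h => (g (s+h) - g s)/h) @ within [set h | 0 <= s+h <= t] 0^' --> d & 0 <= d.

Lemma stepA s : 0 <= s <= t -> forall e : R, 0 < e ->
  \forall u \near s, 0 <= u <= t -> `|g s - g u| < e.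
Proof.
move=> hs e e0; have [d cv _] := H s hs.
have cv2 : (fun h => h * ((g (s+h) - g s)/h)) @ within [set h | 0 <= s+h <= t] 0^' --> 0 * d.
  have cid : (fun h : R => h) @ within [set h | 0 <= s+h <= t] 0^' --> (0:R).
    exact: (cvg_trans (cvg_within _) (cvg_within _)).
  exact: (cvgM cid cv).
rewrite mul0r in cv2; move/cvgrPdist_lt: cv2 => /(_ e e0).
move=> nh.
have nh' : \forall h \near (0:R), h != 0 -> 0 <= s+h <= t ->
   `|0 - h * ((g (s + h) - g s) / h)| < e := nh.
apply/nbhs0P; move: nh'; apply: filterS => h /= Hh Dh.
have [->|hn0] := eqVneq h 0; first by rewrite addr0 subrr normr0.
have := Hh hn0 Dh.
by rewrite mulrCA divff // mulr1 sub0r opprB.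
Qed.


Lemma stepB : {within `[0, t], continuous g}.
Proof.
apply/continuous_within_itvP => //; split.
- move=> s sI; have := sI; rewrite in_itv /= => /andP[s0 st].
  apply/cvgrPdist_lt => e e0.
  have hA := @stepA s ltac:(by rewrite (ltW s0) (ltW st)) e e0.
  have hI := near_in_itvoo sI.
  apply: filterS2 hA hI => u Hu; rewrite in_itv /= => /andP[u0 ut].
  by apply: Hu; rewrite (ltW u0) (ltW ut).
- apply/cvgrPdist_lt => e e0.
  have hA := @stepA 0 ltac:(by rewrite lexx (ltW t0)) e e0.
  have hI := @near_in_itvoo R (-1) t 0 ltac:(by rewrite in_itv /= t0 ltrN10).
  have : \forall u \near (0:R), 0 < u -> `|g 0 - g u| < e.
    apply: filterS2 hA hI => u Hu; rewrite in_itv /= => /andP[_ ut] u0.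
    by apply: Hu; rewrite (ltW u0) (ltW ut).
  by [].
- apply/cvgrPdist_lt => e e0.
  have hA := @stepA t ltac:(by rewrite lexx (ltW t0)) e e0.
  have hI := @near_in_itvoo R 0 (t+1) t ltac:(by rewrite in_itv /= t0 ltrDl ltr01).
  have : \forall u \near t, u < t -> `|g t - g u| < e.
    apply: filterS2 hA hI => u Hu; rewrite in_itv /= => /andP[u0 _] ut.
    by apply: Hu; rewrite (ltW u0) (ltW ut).
  by [].
Qed.


Lemma stepC s : s \in `]0, t[%R ->
  exists2 d, (fun h => h^-1 * (g (h + s) - g s)) @ 0^' --> d & 0 <= d.
Proof.
move=> sI; have := sI; rewrite in_itv /= => /andP[s0 st].
have [d cv d0] := H s ltac:(by rewrite (ltW s0) (ltW st)).
exists d => //.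
have hI := near_in_itvoo sI.
have hD : \forall h \near (0:R), 0 <= s + h <= t.
  apply: (proj1 (nbhs0P (fun u : R => 0 <= u <= t) s)); apply: filterS hI => u; rewrite in_itv /= => /andP[u0 ut].
  by rewrite (ltW u0) (ltW ut).
move=> P /cv; rewrite /within /dnbhs /within /= => hP.
have hP' : \forall h \near (0:R), h != 0 -> 0 <= s+h <= t -> P ((g (s + h) - g s) / h) := hP.
have : \forall h \near (0:R), h != 0 -> P (h^-1 * (g (h + s) - g s)).
  apply: filterS2 hD hP' => h hd hp hn0.
  by rewrite [h + s]addrC mulrC; apply: hp.
by [].
Qed.

Lemma mono1 : g 0 <= g t.
Proof.
apply: (@ger0_derive1_ndecr _ g 0 t _ _ stepB); rewrite ?lexx ?(ltW t0) //.
- move=> s sI; have [d cv _] := stepC s sI.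
  apply/cvg_ex; exists d; move: cv; rewrite /=.
  suff -> : (fun h : R => h^-1 *: (g (h%:A + s) - g s)) = (fun h => h^-1 * (g (h + s) - g s)) by [].
  by apply/funext => h; rewrite /GRing.scale /= mulr1.
- move=> s sI; have [d cv d0] := stepC s sI.
  rewrite /derive1 (cvg_lim _ cv) //.
Qed.

End M.

Theorem corollary3 (R : realType) (n : nat)
    (f : 'I_n -> ('I_n -> R) -> R) (r : 'I_n -> R) :
  wFWF f ->
  nonzero_vec r -> in_cube r ->
  (forall i x, in_cube x -> exists2 d, is_dir_deriv (f i) x r d & 0 <= d) ->
  pre_aggregation (BGM f) /\ r_increasing (BGM f) r.
Proof.
move=> [f01 fsum f1] rnz rc hd.
have cube_seg : forall x t u, in_cube x -> in_cube (Defs.shift x r t) -> 0 <= u <= t ->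
    in_cube (Defs.shift x r u).
  move=> x t u xc xtc /andP[u0 ut] j; rewrite /Defs.shift.
  have := xc j; have := xtc j; have := rc j; rewrite /Defs.shift.
  move=> /andP[r0 r1] /andP[a0 a1] /andP[x0 x1].
  apply/andP; split; nra.
have shiftE : forall x s h, Defs.shift (Defs.shift x r s) r h = Defs.shift x r (s + h).
  by move=> x s h; apply/funext => j; rewrite /Defs.shift mulrDl addrA.
have mono : forall i x t, in_cube x -> 0 < t -> in_cube (Defs.shift x r t) ->
    f i x <= f i (Defs.shift x r t).
  move=> i x t xc t0 xtc.
  have := @mono1 R (fun u => f i (Defs.shift x r u)) t t0.
  have -> : Defs.shift x r 0 = x by apply/funext => j; rewrite /Defs.shift mul0r addr0.
  apply => s hs.
  have [d cv d0] := hd i (Defs.shift x r s) (cube_seg x t s xc xtc hs).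
  exists d => //.
  have -> : (fun h => (f i (Defs.shift x r (s + h)) - f i (Defs.shift x r s)) / h) =
     (fun h => (f i (Defs.shift (Defs.shift x r s) r h) - f i (Defs.shift x r s)) / h).
    by apply/funext => h; rewrite shiftE.
  move=> P /cv; apply: within_subset => h /= hh.
  rewrite shiftE; exact: cube_seg x t (s + h) xc xtc hh.
have rinc : r_increasing (BGM f) r.
  move=> x t xc t0 xtc; apply: ler_sum => i _.
  have := f01 i x xc => /andP[fi0 _].
  have := xc i => /andP[xi0 _].
  apply: ler_pM => //; first exact: mono.
  rewrite /Defs.shift lerDl; apply: mulr_ge0; first exact: ltW.
  by have := rc i => /andP[].
split => //; split.
- move=> x xc; apply/andP; split.
    apply: sumr_ge0 => i _; apply: mulr_ge0.
      by have := f01 i x xc => /andP[].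
    by have := xc i => /andP[].
  apply: le_trans (fsum x xc); apply: ler_sum => i _; apply: ler_piMr.
    by have := f01 i x xc => /andP[].
  by have := xc i => /andP[].
- by rewrite /BGM big1 // => i _; rewrite /zero_vec mulr0.
- by rewrite /BGM -f1; apply: eq_bigr => i _; rewrite /one_vec mulr1.
- by exists r; split.
Qed.
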